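(* Consider either spinless fermions or spinless bosons on the ring $[1:L]$, and let $H=\sum_{m=m_0}^{m_1}H^{(m)}=\bigoplus_{n\ge0}H_n$ be a Hamiltonian of the form described in the context. Let $n\geq m_1$ be such that $H_n\geq 0$ and $$H_{n+1}\geq \frac{1}{n+1-m_0}\sum_{j=1}^L a_j^\dagger H_n a_j .$$ Then $$\operatorname{gap}H_{n+1}\geq \frac{n+1-\Big\|P_{n+1}^\perp\sum_{j=1}^L a_j^\dagger P_n a_j P_{n+1}^\perp\Big\|}{n+1-m_0}\,\operatorname{gap}H_n .$$
   Context: Let $a_j^\dagger,a_j$ ($j\in[1:L]$) be the canonical creation and annihilation operators of spinless fermions (CAR) or bosons (CCR) on the Fock space over $\mathbb{C}^L$, and $N=\sum_{j}a_j^\dagger a_j$. The Hamiltonian is $H=\sum_{m=m_0}^{m_1}H^{(m)}$ with integers $m_0\le m_1$ and $$H^{(m)}=\sum_{1\le j_1,\dots,j_m\le L}\ \sum_{1\le k_1,\dots,k_m\le L} W^{k_1\dots k_m}_{j_1\dots j_m}\,a^\dagger_{j_1}\cdots a^\dagger_{j_m}a_{k_m}\cdots a_{k_1},$$ with coefficients $W\in\mathbb{C}$ such that each $H^{(m)}$ is self-adjoint; $H_n$ denotes the restriction of $H$ to the $n$-particle subspace. For each $n$, $P_n$ is the orthogonal projection (in the $n$-particle space) onto $\ker H_n$, $P_n^\perp=\mathbb{1}-P_n$, and $\operatorname{gap}H_n=\min\{\langle\psi,H_n\psi\rangle:\ \psi\perp\ker H_n,\ \|\psi\|=1\}$. The operator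 $\sum_j a_j^\dagger P_n a_j$ acts on the $(n+1)$-particle space, and $\|\cdot\|$ is the operator norm. *)

(* Defs.v *)
From HB Require Import structures.
From mathcomp Require Import all_boot all_order all_algebra.
From mathcomp Require Import complex.
From mathcomp Require Import classical_sets boolp reals constructive_ereal ereal.
Unset Printing Implicit Defensive.
Import Order.TTheory GRing.Theory Num.Theory.
Local Open Scope ring_scope.
Local Open Scope classical_set_scope.
Local Open Scope complex_scope.

Inductive statistics := Fermion | Boson.

Section Fock.
Variables (R : realType) (stat : statistics) (L : nat).

Local Notation C := R[i].

(** Occupation-number configurations on the sites [1:L] (indexed by 'I_L). *)
Definition cfg := {ffun 'I_L -> nat}.

(** Vectors of the Fock space are coefficient functions on configurations
    (occupation-number basis); operators act on them. *)
Definition vec := cfg -> C.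
Definition op := vec -> vec.

Definition upd (c : cfg) (j : 'I_L) (k : nat) : cfg :=
  [ffun i => if i == j then k else c i].

(** Jordan-Wigner sign (-1)^(number of occupied sites i < j) *)
Definition jwsign (c : cfg) (j : 'I_L) : C :=
  (-1) ^+ (\sum_(i < L | (i < j)%N) c i)%N.

(** admissible configuration (Pauli principle for fermions) *)
Definition admissible (c : cfg) : bool :=
  if stat is Fermion then [forall i, (c i <= 1)%N] else true.

Definition in_sector (n : nat) (c : cfg) : bool :=
  ((\sum_(i < L) c i)%N == n) && admissible c.

(** annihilation operator a_j, acting on coefficient functions:
    bosons:   a_j |c> = sqrt(c_j) |c - e_j>
    fermions: a_j |c> = [c_j = 1] (-1)^{#occupied i<j} |c - e_j> *)
Definition ann (j : 'I_L) : op := fun psi c =>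
  match stat with
  | Boson => (Num.sqrt ((c j).+1)%:R)%:C * psi (upd c j (c j).+1)
  | Fermion => if c j == 0%N then jwsign c j * psi (upd c j 1) else 0
  end.

(** creation operator a_j^dagger (the adjoint of a_j) *)
Definition cre (j : 'I_L) : op := fun psi c =>
  match stat with
  | Boson => if (0 < c j)%N then (Num.sqrt (c j)%:R)%:C * psi (upd c j (c j).-1) else 0
  | Fermion => if c j == 1%N then jwsign c j * psi (upd c j 0) else 0
  end.

(** a_{k_m} ... a_{k_1} psi  (a_{k_1} applied first) *)
Definition ann_str (ks : seq 'I_L) (psi : vec) : vec :=
  foldl (fun phi k => ann k phi) psi ks.

(** a^dagger_{j_1} ... a^dagger_{j_m} psi  (a^dagger_{j_m} applied first) *)
Definition cre_str (js : seq 'I_L) (psi : vec) : vec :=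
  foldr (fun j phi => cre j phi) psi js.

(** Coefficients: W m js ks = W^{k_1 ... k_m}_{j_1 ... j_m} *)
Definition coeffs := forall m : nat, m.-tuple 'I_L -> m.-tuple 'I_L -> C.

Definition Hm (W : coeffs) (m : nat) : op := fun psi c =>
  \sum_(js : m.-tuple 'I_L) \sum_(ks : m.-tuple 'I_L)
     W m js ks * cre_str js (ann_str ks psi) c.

Definition Ham (W : coeffs) (m0 m1 : nat) : op := fun psi c =>
  \sum_(m0 <= m < m1.+1) Hm W m psi c.

Definition sector (n : nat) (psi : vec) : Prop :=
  forall c, ~~ in_sector n c -> psi c = 0.

Definition cfg_of (n : nat) (f : {ffun 'I_L -> 'I_n.+1}) : cfg :=
  [ffun i => nat_of_ord (f i)].

(** inner product on the n-particle space (antilinear in the first slot);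
    every configuration with n particles has all occupations <= n *)
Definition inner (n : nat) (phi psi : vec) : C :=
  \sum_(f : {ffun 'I_L -> 'I_n.+1} | in_sector n (cfg_of n f))
     (phi (cfg_of n f))^* * psi (cfg_of n f).

Definition vnorm (n : nat) (psi : vec) : R :=
  Num.sqrt (complex.Re (inner n psi psi)).

Definition opnorm (n : nat) (X : op) : R :=
  sup [set vnorm n (X psi) | psi in [set psi | sector n psi /\ vnorm n psi = 1]].

Definition in_ker (H : op) (n : nat) (psi : vec) : Prop :=
  sector n psi /\ forall c, H psi c = 0.

Definition is_ker_proj (H : op) (n : nat) (P : op) : Prop :=
  forall psi, sector n psi ->
    in_ker H n (P psi) /\
    forall phi, in_ker H n phi -> inner n phi (fun c => psi c - P psi c) = 0.

(** gap H_n = inf { <psi, H psi> : psi in n-particle space, psi _|_ ker H_n,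
    ||psi|| = 1 }, as an extended real (+oo if the set is empty) *)
Definition gap (H : op) (n : nat) : \bar R :=
  ereal_inf [set (complex.Re (inner n psi (H psi)))%:E | psi in
    [set psi | sector n psi /\ (forall phi, in_ker H n phi -> inner n phi psi = 0)
               /\ vnorm n psi = 1]].

End Fock.

(* Main.v *)
Require Import Defs.
From HB Require Import structures.
From mathcomp Require Import all_boot all_order all_algebra.
From mathcomp Require Import complex.
From mathcomp Require Import classical_sets boolp reals constructive_ereal ereal.
From mathcomp Require Import zify ring lra.
Import Order.TTheory GRing.Theory Num.Theory.
Local Open Scope ring_scope.
Local Open Scope complex_scope.
Local Open Scope ring_scope.

Section Toolkit.
Variables (R : realType) (stat : statistics) (L : nat).
Local Notation C := R[i].
Local Notation vec := (vec R L).
Local Notation cfg := (cfg L).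
Local Notation inner := (inner R stat L).
Local Notation sector := (sector R stat L).
Local Notation in_sector := (in_sector stat L).
Local Notation admissible := (admissible stat L).
Local Notation cfg_of := (cfg_of L).
Local Notation upd := (upd L).

Lemma inner_eqr n (phi u v : vec) :
  (forall c, in_sector n c -> u c = v c) -> inner n phi u = inner n phi v.
Proof. by move=> H; apply: eq_bigr => f /H ->. Qed.

Lemma inner_eql n (phi u v : vec) :
  (forall c, in_sector n c -> u c = v c) -> inner n u phi = inner n v phi.
Proof. by move=> H; apply: eq_bigr => f /H ->. Qed.

Lemma innerDr n (phi u v : vec) :
  inner n phi (fun c => u c + v c) = inner n phi u + inner n phi v.
Proof. by rewrite /inner -big_split; apply: eq_bigr => f _; rewrite mulrDr. Qed.

Lemma innerZr n (phi u : vec) a :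
  inner n phi (fun c => a * u c) = a * inner n phi u.
Proof. by rewrite /inner mulr_sumr; apply: eq_bigr => f _; rewrite mulrCA. Qed.

Lemma innerBr n (phi u v : vec) :
  inner n phi (fun c => u c - v c) = inner n phi u - inner n phi v.
Proof. by rewrite /inner -sumrB; apply: eq_bigr => f _; rewrite mulrBr. Qed.

Lemma inner_sumr n (phi : vec) (I : Type) (r : seq I) (P : pred I) (F : I -> vec) :
  inner n phi (fun c => \sum_(i <- r | P i) F i c) = \sum_(i <- r | P i) inner n phi (F i).
Proof.
rewrite /inner exchange_big /=; apply: eq_bigr => f _; by rewrite mulr_sumr.
Qed.

Lemma inner_conj n (phi psi : vec) : inner n psi phi = (inner n phi psi)^*.
Proof.
rewrite /inner rmorph_sum; apply: eq_bigr => f _.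
by rewrite rmorphM /= conjCK mulrC.
Qed.

Lemma innerDl n (phi u v : vec) :
  inner n (fun c => u c + v c) phi = inner n u phi + inner n v phi.
Proof. by rewrite inner_conj innerDr rmorphD /= -!inner_conj. Qed.

Lemma innerBl n (phi u v : vec) :
  inner n (fun c => u c - v c) phi = inner n u phi - inner n v phi.
Proof. by rewrite inner_conj innerBr rmorphB /= -!inner_conj. Qed.

Lemma innerZl n (phi u : vec) a :
  inner n (fun c => a * u c) phi = a^* * inner n u phi.
Proof. by rewrite inner_conj innerZr rmorphM /= -!inner_conj. Qed.

Lemma inner_ge0 n (phi : vec) : 0 <= inner n phi phi.
Proof.
apply: sumr_ge0 => f _; rewrite mulrC; exact: mul_conjC_ge0.
Qed.

Lemma cfg_ofK n (c : cfg) : in_sector n c ->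
  cfg_of n [ffun i => inord (c i)] = c.
Proof.
move=> /andP[/eqP Hs _]; apply/ffunP => i; rewrite !ffunE inordK //.
rewrite ltnS -Hs (bigD1 i) //=; exact: leq_addr.
Qed.

Lemma inner_eq0 n (phi : vec) : inner n phi phi = 0 ->
  forall c, in_sector n c -> phi c = 0.
Proof.
move=> H0 c Hc.
have Hge : forall f : {ffun 'I_L -> 'I_n.+1}, in_sector n (cfg_of n f) ->
    0 <= (phi (cfg_of n f))^* * phi (cfg_of n f).
  move=> f _; rewrite mulrC; exact: mul_conjC_ge0.
have := @psumr_eq0P _ _ _ (fun f => (phi (cfg_of n f))^* * phi (cfg_of n f)) Hge H0.
move=> /(_ [ffun i => inord (c i)]); rewrite cfg_ofK // => /(_ Hc) /eqP.
by rewrite mulf_eq0 conjC_eq0 orbb => /eqP.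
Qed.

End Toolkit.

Section Lin.
Variables (R : realType) (stat : statistics) (L : nat).
Local Notation C := R[i].
Local Notation vec := (vec R L).
Local Notation op := (op R L).
Local Notation cfg := (cfg L).
Local Notation ann := (ann R stat L).
Local Notation cre := (cre R stat L).

Definition lin (T : op) := forall (a : C) (u v : vec),
  T (fun c => a * u c + v c) = (fun c => a * T u c + T v c).

Lemma ann_lin j : lin (ann j).
Proof.
move=> a u v; apply: funext => c; rewrite /ann; case: stat.
  by case: ifP => _; rewrite ?mulr0 ?addr0 // mulrDr mulrCA.
by rewrite mulrDr mulrCA.
Qed.

Lemma cre_lin j : lin (cre j).
Proof.
move=> a u v; apply: funext => c; rewrite /cre; case: stat.
  by case: ifP => _; rewrite ?mulr0 ?addr0 // mulrDr mulrCA.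
by case: ifP => _; rewrite ?mulr0 ?addr0 // mulrDr mulrCA.
Qed.

Lemma ann_str_cons k ks (psi : vec) :
  ann_str R stat L (k :: ks) psi = ann_str R stat L ks (ann k psi).
Proof. by []. Qed.

Lemma cre_str_cons k ks (psi : vec) :
  cre_str R stat L (k :: ks) psi = cre k (cre_str R stat L ks psi).
Proof. by []. Qed.

Lemma ann_str_lin ks : lin (ann_str R stat L ks).
Proof.
elim: ks => [|k ks IH] a u v; first by [].
by rewrite !ann_str_cons ann_lin IH.
Qed.

Lemma cre_str_lin js : lin (cre_str R stat L js).
Proof.
elim: js => [|j js IH] a u v; first by [].
rewrite !cre_str_cons IH cre_lin; apply: funext => c.
by rewrite -!cre_str_cons.
Qed.

Lemma Hm_lin W m : lin (Hm R stat L W m).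
Proof.
move=> a u v; apply: funext => c; rewrite /Hm mulr_sumr -big_split /=.
apply: eq_bigr => js _; rewrite mulr_sumr -big_split /=.
apply: eq_bigr => ks _; rewrite ann_str_lin cre_str_lin.
by rewrite mulrDr mulrCA.
Qed.

Lemma Ham_lin W m0 m1 : lin (Ham R stat L W m0 m1).
Proof.
move=> a u v; apply: funext => c; rewrite /Ham mulr_sumr -big_split /=.
by apply: eq_bigr => m _; rewrite Hm_lin.
Qed.

Lemma lin0 T : lin T -> T (fun _ => 0) = (fun _ => 0).
Proof.
move=> H; have := H 1 (fun _ => 0) (fun _ => 0).
have -> : (fun c : cfg => 1 * (fun _ : cfg => 0 : C) c + (fun _ => 0) c) = (fun _ => 0).
  by apply: funext => c /=; rewrite mul1r addr0.
move=> E; apply: funext => c; have /(congr1 (fun f => f c)) := E.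
rewrite mul1r => /esym /eqP; rewrite -subr_eq0 addrK => /eqP.
by [].
Qed.

Lemma linD T u v : lin T -> T (fun c => u c + v c) = (fun c => T u c + T v c).
Proof.
move=> H; have := H 1 u v.
have -> : (fun c : cfg => 1 * u c + v c) = (fun c => u c + v c).
  by apply: funext => c; rewrite mul1r.
by move=> ->; apply: funext => c; rewrite mul1r.
Qed.

Lemma linZ T a u : lin T -> T (fun c => a * u c) = (fun c => a * T u c).
Proof.
move=> H; have := H a u (fun _ => 0).
have -> : (fun c : cfg => a * u c + (fun _ => 0 : C) c) = (fun c => a * u c).
  by apply: funext => c; rewrite addr0.
by move=> ->; rewrite lin0 //; apply: funext => c; rewrite addr0.
Qed.

Lemma linB T u v : lin T -> T (fun c => u c - v c) = (fun c => T u c - T v c).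
Proof.
move=> H; have := H (-1) v u.
have -> : (fun c : cfg => -1 * v c + u c) = (fun c => u c - v c).
  by apply: funext => c; rewrite mulN1r addrC.
by move=> ->; apply: funext => c; rewrite mulN1r addrC.
Qed.

End Lin.

Section Cfg.
Variables (R : realType) (stat : statistics) (L : nat).
Local Notation C := R[i].
Local Notation vec := (vec R L).
Local Notation cfg := (cfg L).
Local Notation upd := (upd L).
Local Notation admissible := (admissible stat L).
Local Notation in_sector := (in_sector stat L).
Local Notation sector := (sector R stat L).
Local Notation ann := (ann R stat L).
Local Notation cre := (cre R stat L).

Lemma upd_same (c : cfg) j k : upd c j k j = k.
Proof. by rewrite /upd ffunE eqxx. Qed.

Lemma upd_other (c : cfg) j k i : i != j -> upd c j k i = c i.
Proof. by rewrite /upd ffunE => /negPf ->. Qed.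

Lemma upd_upd (c : cfg) j k k' : upd (upd c j k) j k' = upd c j k'.
Proof. apply/ffunP => i; rewrite !ffunE; by case: eqP. Qed.

Lemma upd_id (c : cfg) j : upd c j (c j) = c.
Proof. apply/ffunP => i; rewrite !ffunE; by case: eqP => [->|]. Qed.

Lemma sum_split (c : cfg) j :
  (\sum_(i < L) c i = c j + \sum_(i < L | i != j) c i)%N.
Proof. by rewrite (bigD1 j). Qed.

Lemma sum_upd (c : cfg) j k :
  (\sum_(i < L) upd c j k i = k + \sum_(i < L | i != j) c i)%N.
Proof.
rewrite (sum_split _ j) upd_same; congr (_ + _)%N.
by apply: eq_bigr => i /upd_other ->.
Qed.

Lemma adm_upd (c : cfg) j k : admissible (upd c j k) ->
  forall k', (k' <= k)%N -> admissible (upd c j k').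
Proof.
rewrite /admissible; case: stat => // /forallP H k' Hk; apply/forallP => i.
have := H i; rewrite !ffunE; case: eqP => // _; exact: leq_trans.
Qed.

Lemma adm_upd_iff (c : cfg) j k : admissible c -> (k <= 1)%N -> admissible (upd c j k).
Proof.
rewrite /admissible; case: stat => // /forallP H Hk; apply/forallP => i.
rewrite ffunE; case: eqP => // _; exact: H.
Qed.

Lemma adm_upd_back (c : cfg) j k : admissible (upd c j k) -> (c j <= 1)%N ->
  admissible c.
Proof.
rewrite /admissible; case: stat => // /forallP H Hk; apply/forallP => i.
have := H i; rewrite ffunE; case: eqP => [->|] //.
Qed.

Lemma adm_fermion (c : cfg) j : stat = Fermion -> admissible c -> (c j <= 1)%N.
Proof. by rewrite /admissible => -> /forallP. Qed.

Lemma ann_sector n (psi : vec) j : sector n.+1 psi -> sector n (ann j psi).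
Proof.
move=> Hs c Hc; rewrite /ann; case E: stat.
  case: ifP => // /eqP cj0; rewrite Hs ?mulr0 //.
  apply: contra Hc; rewrite /in_sector => /andP[]; rewrite sum_upd (sum_split c j) cj0 /=.
  rewrite eqSS => -> Ha /=; apply: (adm_upd_back _ _ _ Ha); by rewrite cj0.
rewrite Hs ?mulr0 //; apply: contra Hc; rewrite /in_sector => /andP[].
rewrite sum_upd (sum_split c j) addSn eqSS => -> _ /=.
by rewrite /admissible E.
Qed.

Lemma cre_sector n (phi : vec) j : sector n phi -> sector n.+1 (cre j phi).
Proof.
move=> Hs c Hc; rewrite /cre; case E: stat.
  case: ifP => // /eqP cj1; rewrite Hs ?mulr0 //.
  apply: contra Hc; rewrite /in_sector => /andP[]; rewrite sum_upd (sum_split c j) cj1 /=.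
  move=> /eqP Hsum Ha; rewrite -Hsum add0n eqxx /=.
  have -> : c = upd (upd c j 0) j 1 by rewrite upd_upd -cj1 upd_id.
  exact: adm_upd_iff.
case: ifP => // cj0; rewrite Hs ?mulr0 //; apply: contra Hc; rewrite /in_sector => /andP[].
rewrite sum_upd (sum_split c j) => /eqP <- _.
by rewrite -addSn prednK // eqxx /admissible E.
Qed.

Local Notation cfg_of := (cfg_of L).

Definition S n (F : cfg -> C) :=
  \sum_(f : {ffun 'I_L -> 'I_n.+1} | in_sector n (cfg_of n f)) F (cfg_of n f).

Lemma sector_le n (c : cfg) i : in_sector n c -> (c i <= n)%N.
Proof. move=> /andP[/eqP <- _]; rewrite (sum_split c i); exact: leq_addr. Qed.

Lemma shift n j (F : cfg -> C) :
  S n.+1 (fun c => if (0 < c j)%N then F c else 0) =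
  S n (fun c => if admissible (upd c j (c j).+1) then F (upd c j (c j).+1) else 0).
Proof.
rewrite /S -big_mkcondr -[RHS]big_mkcondr /=.
pose h (g : {ffun 'I_L -> 'I_n.+1}) : {ffun 'I_L -> 'I_n.+2} :=
  [ffun i => inord (g i + (i == j))].
pose h' (f : {ffun 'I_L -> 'I_n.+2}) : {ffun 'I_L -> 'I_n.+1} :=
  [ffun i => inord (f i - (i == j))].
have hg g : cfg_of n.+1 (h g) = upd (cfg_of n g) j ((cfg_of n g) j).+1.
  apply/ffunP => i; rewrite !ffunE inordK; last first.
    by have := leq_add (ltn_ord (g i)) (leq_b1 (i == j)); rewrite addn1 addSn.
  by case: eqP => [->|]; rewrite ?addn1 ?addn0.
have h'h g : h' (h g) = g.
  apply/ffunP => i; apply: val_inj; rewrite !ffunE /=.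
  have Hlt : (g i + (i == j) < n.+2)%N.
    by have := leq_add (ltn_ord (g i)) (leq_b1 (i == j)); rewrite addn1 addSn.
  by rewrite (inordK Hlt) addnK inordK.
rewrite (reindex_onto h h').
  apply: eq_big => g; last by move=> _; rewrite hg.
  rewrite h'h eqxx andbT hg upd_same ltn0Sn andbT.
  rewrite /in_sector sum_upd (sum_split (cfg_of n g) j) addSn eqSS.
  case: (_ == n) => //=.
  case Ha: (admissible (upd _ _ _)); last by rewrite andbF.
  rewrite andbT; apply/esym.
  have := adm_upd _ _ _ Ha (cfg_of n g j) (leqnSn _); by rewrite upd_id.
move=> f /andP[Hs Hj]; apply/ffunP => i; apply: val_inj; rewrite !ffunE /=.
have Hfj : (0 < f j)%N by move: Hj; rewrite ffunE.
have Hb : (f i - (i == j) < n.+1)%N.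
  case: eqP => [->|/eqP ij].
    by have := sector_le _ _ j Hs; rewrite ffunE /=; lia.
  move: Hs => /andP[/eqP Hs _].
  have := Hs; rewrite (sum_split _ j) (bigD1 i) //= !ffunE => E.
  rewrite subn0; move: E Hfj; set s := (\sum_(_ < _ | _) _)%N; set a := nat_of_ord (f i); set b := nat_of_ord (f j); lia.
rewrite inordK ?Hb // inordK ?Hb //.
  by case: eqP => [->|_] /=; rewrite ?subn0 ?addn0 // subn1 addn1 prednK.
by case: eqP Hb => [->|_] /=; rewrite ?subn0 ?addn0 ?subn1 ?addn1 ?prednK // => /leqW.
Qed.

Local Notation inner := (inner R stat L).
Local Notation jwsign := (jwsign R L).

Lemma jwsign_upd (c : cfg) j k : jwsign (upd c j k) j = jwsign c j.
Proof.
rewrite /jwsign; congr (_ ^+ _); apply: eq_bigr => i Hi.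
by rewrite upd_other // neq_ltn Hi.
Qed.

Lemma jwsign_conj (c : cfg) j : (jwsign c j)^* = jwsign c j.
Proof. by rewrite /jwsign rmorphXn rmorphN1. Qed.

Lemma jwsign_sq (c : cfg) j : jwsign c j * jwsign c j = 1.
Proof. by rewrite /jwsign -exprD addnn -mul2n exprM sqrrN expr1n expr1n. Qed.

Lemma adm_upd_le (c : cfg) j k : stat = Fermion -> admissible (upd c j k) -> (k <= 1)%N.
Proof. by rewrite /admissible => -> /forallP /(_ j); rewrite upd_same. Qed.

Lemma conj_sqrt (x : R) : ((Num.sqrt x)%:C)^* = (Num.sqrt x)%:C.
Proof. by rewrite geC0_conj // ler0c sqrtr_ge0. Qed.

Lemma adjoint n j (psi phi : vec) :
  inner n.+1 psi (cre j phi) = inner n (ann j psi) phi.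
Proof.
have -> : inner n.+1 psi (cre j phi) =
    S n.+1 (fun c => if (0 < c j)%N then (psi c)^* * cre j phi c else 0).
  apply: eq_bigr => f _; case: ifP => //; rewrite lt0n => /negbFE /eqP c0.
  by rewrite /cre; case: stat; rewrite c0 /= mulr0.
rewrite shift; apply: eq_bigr => g /andP[_ Ha]; set c := cfg_of n g.
rewrite /cre /ann; case E: stat.
  have cj1 := adm_fermion c j E Ha.
  case: (eqVneq (c j) 0%N) => [cj0|cjn0].
    rewrite cj0 -E adm_upd_iff // upd_same eqxx upd_upd -cj0 upd_id cj0.
    by rewrite rmorphM /= jwsign_conj jwsign_upd mulrCA mulrA.
  case: ifP => [|]; last by rewrite rmorph0 mul0r.
  by rewrite -E => /(adm_upd_le _ _ _ E); rewrite ltnS leqn0 (negPf cjn0).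
rewrite upd_same /= upd_upd upd_id.
by rewrite rmorphM /= conj_sqrt mulrCA mulrA.
Qed.

Lemma cre_ann j (psi : vec) (c : cfg) : admissible c ->
  cre j (ann j psi) c = (c j)%:R * psi c.
Proof.
move=> Ha; rewrite /cre /ann; case E: stat.
  have cj1 := adm_fermion c j E Ha.
  case: (eqVneq (c j) 1%N) => [cj|cjn].
    rewrite upd_same eqxx upd_upd -cj upd_id cj jwsign_upd mulrA jwsign_sq.
    by rewrite mul1r.
  have -> : c j = 0%N by move: cj1 cjn; case: (c j) => [|[]].
  by rewrite mul0r.
case: ifP => [cj|]; last by rewrite lt0n => /negbFE /eqP ->; rewrite mul0r.
rewrite upd_same upd_upd prednK // upd_id mulrA -rmorphM /=.
rewrite -expr2 sqr_sqrtr ?ler0n //.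
by rewrite rmorph_nat.
Qed.

Lemma ann_cre j (phi : vec) (c : cfg) : admissible c ->
  ann j (cre j phi) c = (if stat is Boson then (c j).+1 else 1 - c j)%:R * phi c.
Proof.
move=> Ha; rewrite /cre /ann; case E: stat.
  have cj1 := adm_fermion c j E Ha.
  case: (eqVneq (c j) 0%N) => [cj|cjn].
    rewrite cj upd_same eqxx upd_upd -cj upd_id jwsign_upd mulrA jwsign_sq.
    by rewrite subSnn mul1r.
  have -> : c j = 1%N by move: cj1 cjn; case: (c j) => [|[]].
  by rewrite subnn mul0r.
rewrite upd_same /= upd_upd upd_id mulrA -rmorphM /=.
rewrite -expr2 sqr_sqrtr ?ler0n //.
by rewrite rmorph_nat.
Qed.

Lemma conj_real (a : R) : (a%:C)^* = a%:C.
Proof. by apply/conj_Creal/complex_realP; exists a. Qed.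

Lemma ReZ (a : R) (z : C) : complex.Re (a%:C * z) = a * complex.Re z.
Proof. by case: z => x y /=; rewrite mul0r subr0. Qed.

Lemma ReD (z w : C) : complex.Re (z + w) = complex.Re z + complex.Re w.
Proof. by case: z; case: w. Qed.

Lemma ReB (z w : C) : complex.Re (z - w) = complex.Re z - complex.Re w.
Proof. by case: z; case: w. Qed.

Lemma Re_sum (I : Type) (r : seq I) (P : pred I) (F : I -> C) :
  complex.Re (\sum_(i <- r | P i) F i) = \sum_(i <- r | P i) complex.Re (F i).
Proof. by apply: (big_morph _ ReD). Qed.

Lemma Re_conj (z : C) : complex.Re (z^*) = complex.Re z.
Proof. by case: z. Qed.

Lemma natC k : (k%:R : C) = (k%:R : R)%:C.
Proof. by rewrite rmorph_nat. Qed.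

Lemma lec_Re (z w : C) : z <= w -> complex.Re z <= complex.Re w.
Proof. by rewrite lecE => /andP[]. Qed.

Lemma inner_Re_ge0 n (phi : vec) : 0 <= complex.Re (inner n phi phi).
Proof. have := inner_ge0 R stat L n phi; rewrite lecE => /andP[_]; by []. Qed.

Lemma inner_real n (phi : vec) : inner n phi phi = (complex.Re (inner n phi phi))%:C.
Proof.
have := ger0_Im (inner_ge0 R stat L n phi); case: (inner n phi phi) => a b /= ->; by [].
Qed.

Lemma inner_Re_eq0 n (phi : vec) : complex.Re (inner n phi phi) = 0 ->
  forall c, in_sector n c -> phi c = 0.
Proof. by move=> H; apply: inner_eq0; rewrite inner_real H. Qed.

Lemma inner0l n (v w : vec) : (forall c, in_sector n c -> v c = 0) -> inner n v w = 0.
Proof. by move=> Hv; rewrite /inner big1 // => f Hf; rewrite Hv // conjC0 mul0r. Qed.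

Lemma inner0r n (v w : vec) : (forall c, in_sector n c -> w c = 0) -> inner n v w = 0.
Proof. by move=> Hv; rewrite /inner big1 // => f Hf; rewrite Hv // mulr0. Qed.

Lemma number_sum n (psi : vec) :
  \sum_(j < L) inner n (ann j psi) (ann j psi) = (n.+1)%:R * inner n.+1 psi psi.
Proof.
under eq_bigr => j _ do rewrite -adjoint.
rewrite -inner_sumr -innerZr; apply: inner_eqr => c /andP[/eqP Hs Ha].
under eq_bigr => j _ do rewrite cre_ann //.
by rewrite -mulr_suml -natr_sum Hs.
Qed.

Lemma cre_bound n j (phi : vec) :
  complex.Re (inner n.+1 (cre j phi) (cre j phi)) <=
  (n.+1)%:R * complex.Re (inner n phi phi).
Proof.
rewrite adjoint -ReZ -natC; apply: lec_Re.
rewrite /inner mulr_sumr; apply: ler_sum => f Hf.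
rewrite ann_cre; last by case/andP: Hf.
rewrite rmorphM /= conjC_nat -mulrA; apply: ler_wpM2r.
  by rewrite mulrC mul_conjC_ge0.
rewrite ler_nat; have := sector_le _ _ j Hf; case: stat => /=; lia.
Qed.

Lemma inner_suml n (w : vec) (I : Type) (r : seq I) (P : pred I) (F : I -> vec) :
  inner n (fun c => \sum_(i <- r | P i) F i c) w = \sum_(i <- r | P i) inner n (F i) w.
Proof.
rewrite inner_conj inner_sumr rmorph_sum; apply: eq_bigr => i _.
by rewrite [RHS]inner_conj.
Qed.

Lemma Re_inner_sym n (v w : vec) :
  complex.Re (inner n v w) = complex.Re (inner n w v).
Proof. by rewrite (inner_conj _ _ _ n v w) Re_conj. Qed.

Lemma sector_lin n a (u v : vec) : sector n u -> sector n v ->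
  sector n (fun c => a * u c + v c).
Proof. by move=> Hu Hv c Hc; rewrite Hu // Hv // mulr0 addr0. Qed.

Lemma sector_sub n (u v : vec) : sector n u -> sector n v ->
  sector n (fun c => u c - v c).
Proof. by move=> Hu Hv c Hc; rewrite Hu // Hv // subr0. Qed.

Lemma sector_scale n a (u : vec) : sector n u -> sector n (fun c => a * u c).
Proof. by move=> Hu c Hc; rewrite Hu // mulr0. Qed.

Variables (H P : op R L) (n : nat).
Hypothesis HP : is_ker_proj R stat L H n P.

Lemma proj_sector (phi : vec) : sector n phi -> sector n (P phi).
Proof. by move=> Hs; have [[]] := HP _ Hs. Qed.

Lemma proj_ker (phi : vec) : sector n phi -> forall c, H (P phi) c = 0.
Proof. by move=> Hs; have [[]] := HP _ Hs. Qed.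

Lemma proj_orth (phi : vec) : sector n phi ->
  inner n (P phi) (fun c => phi c - P phi c) = 0.
Proof. by move=> Hs; have [Hk Ho] := HP _ Hs; apply: Ho. Qed.

Lemma proj_orth' (phi : vec) : sector n phi ->
  inner n (fun c => phi c - P phi c) (P phi) = 0.
Proof. by move=> Hs; rewrite inner_conj proj_orth // conjC0. Qed.

Lemma proj_pyth (phi : vec) : sector n phi ->
  inner n phi phi = inner n (P phi) (P phi) +
                    inner n (fun c => phi c - P phi c) (fun c => phi c - P phi c).
Proof.
move=> Hs; set u := (fun c => phi c - P phi c).
have E : phi = (fun c => P phi c + u c).
  by apply: funext => c; rewrite /u addrC subrK.
have -> : inner n phi phi = inner n (fun c => P phi c + u c) (fun c => P phi c + u c).
  by rewrite -E.
rewrite innerDl !(innerDr _ _ _ _ _ (P phi) u) proj_orth // proj_orth' // addr0 add0r.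
done.
Qed.

Lemma proj_inner (phi : vec) : sector n phi ->
  inner n phi (P phi) = inner n (P phi) (P phi).
Proof.
move=> Hs; set u := (fun c => phi c - P phi c).
have -> : inner n phi (P phi) = inner n (fun c => P phi c + u c) (P phi).
  by apply: inner_eql => c _; rewrite /u addrC subrK.
by rewrite innerDl proj_orth' // addr0.
Qed.

Lemma proj_contr (phi : vec) : sector n phi ->
  complex.Re (inner n (P phi) (P phi)) <= complex.Re (inner n phi phi) /\
  complex.Re (inner n (fun c => phi c - P phi c) (fun c => phi c - P phi c))
     <= complex.Re (inner n phi phi).
Proof.
move=> Hs; rewrite (proj_pyth _ Hs) !ReD; split.
  by rewrite lerDl inner_Re_ge0.
by rewrite lerDr inner_Re_ge0.
Qed.

End Cfg.

Arguments proj_sector {R stat L H P n} HP {phi}.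
Arguments proj_ker {R stat L H P n} HP {phi}.
Arguments proj_orth {R stat L H P n} HP {phi}.
Arguments proj_orth' {R stat L H P n} HP {phi}.
Arguments proj_pyth {R stat L H P n} HP {phi}.
Arguments proj_inner {R stat L H P n} HP {phi}.
Arguments proj_contr {R stat L H P n} HP {phi}.
Arguments sector_sub {R stat L n u v}.
Arguments sector_scale {R stat L n a u}.
Arguments sector_lin {R stat L n a u v}.
Arguments ann_sector {R stat L n psi j}.
Arguments cre_sector {R stat L n phi j}.
Arguments inner_Re_ge0 {R stat L}.
Arguments inner_Re_eq0 {R stat L n phi}.

Section Main.
Variables (R : realType) (stat : statistics) (L : nat).
Variables (W : coeffs R L) (m0 m1 n : nat) (Pn : op R L).
Local Notation C := R[i].
Local Notation vec := (vec R L).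
Local Notation cfg := (cfg L).
Local Notation inner := (inner R stat L).
Local Notation sector := (sector R stat L).
Local Notation H := (Ham R stat L W m0 m1).
Local Notation Re := complex.Re.

Hypothesis Hsa : forall k (phi psi : vec), sector k phi -> sector k psi ->
  inner k phi (H psi) = inner k (H phi) psi.
Hypothesis HPn : is_ker_proj R stat L H n Pn.

Lemma gap_lower (phi : vec) : sector n phi ->
  ((Re (inner n (fun c => phi c - Pn phi c) (fun c => phi c - Pn phi c)))%:E
     * gap R stat L H n <= (Re (inner n phi (H phi)))%:E)%E.
Proof.
move=> Hs; set u := (fun c => phi c - Pn phi c).
have HsP := proj_sector HPn Hs.
have Hu : sector n u := sector_sub Hs HsP.
have EHphi : H phi = H u.
  have E1 : (fun c => u c + Pn phi c) = phi by apply: funext => c; rewrite /u subrK.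
  rewrite -{1}E1 linD; last exact: Ham_lin.
  by apply: funext => c; rewrite (proj_ker HPn) ?addr0.
have EH : inner n phi (H phi) = inner n u (H u).
  rewrite EHphi.
  have -> : inner n phi (H u) = inner n (fun c => u c + Pn phi c) (H u).
    by apply: inner_eql => c _; rewrite /u subrK.
  rewrite innerDl (Hsa _ _ _ HsP Hu) (@inner0l _ _ _ _ (H (Pn phi))) ?addr0 //.
  by move=> c _; rewrite (proj_ker HPn).
rewrite EH.
have : 0 <= Re (inner n u u) by apply: inner_Re_ge0.
rewrite le_eqVlt => /predU1P[H0|Hgt].
  rewrite -H0 mul0e (@inner0l _ _ _ _ u) //.
  by apply: inner_Re_eq0; rewrite -H0.
set s2 := Re (inner n u u) in Hgt *.
set s := Num.sqrt s2.
have s_gt0 : 0 < s by rewrite sqrtr_gt0.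
have s2E : s2 = s * s by rewrite -expr2 sqr_sqrtr // ltW.
set v := (fun c => (s^-1)%:C * u c).
have Hgap : (gap R stat L H n <= (s^-1 * (s^-1 * Re (inner n u (H u))))%:E)%E.
  apply: ereal_inf_lbound; exists v; last first.
    rewrite /v linZ; last exact: Ham_lin.
    by rewrite innerZr innerZl conj_real !ReZ.
  split; first exact: sector_scale.
  split.
    move=> psi Hk; rewrite /v innerZr.
    by have [_ ->] := HPn _ Hs; rewrite ?mulr0.
  rewrite /vnorm /v innerZr innerZl conj_real !ReZ -/s2 s2E.
  by rewrite mulrA -mulrA mulKf ?mulVf ?sqrtr1 // gt_eqF.
apply: le_trans (lee_wpmul2l _ Hgap) _; first by rewrite lee_fin ltW.
rewrite -EFinM lee_fin s2E le_eqVlt; apply/orP; left; apply/eqP; field; by rewrite gt_eqF.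
Qed.

Lemma sum_bound k (F : 'I_L -> vec) :
  Re (inner k (fun c => \sum_(j < L) F j c) (fun c => \sum_(j < L) F j c)) <=
  L%:R * \sum_(j < L) Re (inner k (F j) (F j)).
Proof.
rewrite inner_suml Re_sum.
under eq_bigr => i _ do rewrite inner_sumr Re_sum.
set a := fun j => Re (inner k (F j) (F j)).
have key : forall i j, 2 * Re (inner k (F i) (F j)) <= a i + a j.
  move=> i j.
  have : 0 <= Re (inner k (fun c => F i c - F j c) (fun c => F i c - F j c)).
    by apply: inner_Re_ge0.
  rewrite innerBl !innerBr !ReB (Re_inner_sym _ _ _ k (F j) (F i)) /a.
  lra.
have H1 : \sum_(i < L) \sum_(j < L) (2 * Re (inner k (F i) (F j))) <=
          \sum_(i < L) \sum_(j < L) (a i + a j).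
  by apply: ler_sum => i _; apply: ler_sum => j _; exact: key.
have H2 : \sum_(i < L) \sum_(j < L) (a i + a j) = 2 * (L%:R * \sum_(j < L) a j).
  under eq_bigr => i _ do rewrite big_split /= sumr_const card_ord.
  rewrite big_split /= sumr_const card_ord -sumrMnl.
  set S := \sum_(j < L) a j.
  have -> : \sum_(i < L) a i *+ L = S *+ L by rewrite sumrMnl.
  rewrite -mulr_natl; ring.
rewrite H2 in H1.
have Hx : \sum_(i < L) \sum_(j < L) (2 * Re (inner k (F i) (F j))) =
          2 * \sum_(i < L) \sum_(j < L) Re (inner k (F i) (F j)).
  by rewrite mulr_sumr; apply: eq_bigr => i _; rewrite mulr_sumr.
rewrite Hx ler_pM2l in H1; last by [].
exact: H1.
Qed.

End Main.

Section CS.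
Variables (R : realType) (stat : statistics) (L : nat).
Local Notation vec := (vec R L).
Local Notation inner := (inner R stat L).
Local Notation Re := complex.Re.

Lemma vnorm_sq k (chi : vec) : vnorm R stat L k chi ^+ 2 = Re (inner k chi chi).
Proof. by rewrite /vnorm sqr_sqrtr //; apply: inner_Re_ge0. Qed.

Lemma cs_unit k (psi chi : vec) : Re (inner k psi psi) = 1 ->
  Re (inner k psi chi) <= vnorm R stat L k chi.
Proof.
move=> H1; set r := vnorm R stat L k chi.
have r0 : 0 <= r by rewrite /r /vnorm sqrtr_ge0.
have Hr2 := vnorm_sq k chi; rewrite -/r in Hr2.
have : 0 <= Re (inner k (fun c => r%:C * psi c - chi c) (fun c => r%:C * psi c - chi c)).
  by apply: inner_Re_ge0.
rewrite innerBl !innerBr !innerZl !innerZr conj_real !ReB !ReZ H1 -Hr2.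
rewrite (Re_inner_sym _ _ _ k chi psi) => Hd.
move: r0; rewrite le_eqVlt => /predU1P[r0|rpos].
  rewrite -r0 (@inner0r _ _ _ _ psi chi) //.
  apply: inner_Re_eq0; by rewrite -Hr2 -r0 expr2 mul0r.
nra.
Qed.

End CS.

Lemma sector_sum (R : realType) (stat : statistics) (L k : nat) (F : 'I_L -> vec R L) :
  (forall j, sector R stat L k (F j)) -> sector R stat L k (fun c => \sum_(j < L) F j c).
Proof. by move=> HF c Hc; rewrite big1 // => j _; apply: HF. Qed.

Local Open Scope complex_scope.

Theorem lemma1 (R : realType) (stat : statistics) (L : nat)
  (W : coeffs R L) (m0 m1 : nat) (n : nat)
  (Pn Pn1 : op R L) :
  (m0 <= m1)%N ->
  (* each H^{(m)}, m0 <= m <= m1, is self-adjoint *)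
  (forall m, (m0 <= m <= m1)%N -> forall k (phi psi : vec R L),
      sector R stat L k phi -> sector R stat L k psi ->
      inner R stat L k phi (Hm R stat L W m psi) = inner R stat L k (Hm R stat L W m phi) psi) ->
  (m1 <= n)%N ->
  (* H_n >= 0 *)
  (forall psi, sector R stat L n psi ->
      0 <= inner R stat L n psi (Ham R stat L W m0 m1 psi)) ->
  (* H_{n+1} >= 1/(n+1-m0) sum_j a_j^+ H_n a_j *)
  (forall psi, sector R stat L n.+1 psi ->
      ((n.+1 - m0)%:R)^-1 *
        \sum_(j < L) inner R stat L n.+1 psi
             (cre R stat L j (Ham R stat L W m0 m1 (ann R stat L j psi)))
      <= inner R stat L n.+1 psi (Ham R stat L W m0 m1 psi)) ->
  (* P_n, P_{n+1}: orthogonal projections onto ker H_n, ker H_{n+1} *)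
  is_ker_proj R stat L (Ham R stat L W m0 m1) n Pn ->
  is_ker_proj R stat L (Ham R stat L W m0 m1) n.+1 Pn1 ->
  let Pperp : op R L := fun psi c => psi c - Pn1 psi c in
  let X : op R L := fun psi =>
      Pperp (fun c => \sum_(j < L) cre R stat L j (Pn (ann R stat L j (Pperp psi))) c) in
  ((((n.+1)%:R - opnorm R stat L n.+1 X) / (n.+1 - m0)%:R)%:E
     * gap R stat L (Ham R stat L W m0 m1) n
   <= gap R stat L (Ham R stat L W m0 m1) n.+1)%E.
Proof.
move=> Hm01 HsaM Hm1n Hpos Hineq HPn HPn1; cbv zeta.
match goal with |- context [opnorm _ _ _ _ ?Y] => set X := Y end.
set H := Ham R stat L W m0 m1.
have Hsa : forall k (phi psi : vec R L), sector R stat L k phi -> sector R stat L k psi ->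
    inner R stat L k phi (H psi) = inner R stat L k (H phi) psi.
  move=> k phi psi Hphi Hpsi; rewrite /H /Ham inner_sumr inner_suml.
  rewrite big_nat_cond [RHS]big_nat_cond; apply: eq_bigr => m /andP[/andP[Ha Hb] _].
  by apply: HsaM => //; rewrite Ha -ltnS.
have g0 : (0 <= gap R stat L H n)%E.
  apply: le_ereal_inf_tmp => _ [phi [Hphi _] <-]; rewrite lee_fin.
  by have := Hpos phi Hphi; rewrite lecE => /andP[_].
set S := [set vnorm R stat L n.+1 (X psi) | psi in
           [set psi | sector R stat L n.+1 psi /\ vnorm R stat L n.+1 psi = 1]]%classic.
have Hub : has_ubound S.
  exists (Num.sqrt (L%:R * (n.+1)%:R ^+ 2)) => _ [psi' [Hs' Hn'] <-].
  rewrite /vnorm; apply: ler_wsqrtr.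
  set chi := fun c => psi' c - Pn1 psi' c.
  have Hchi : sector R stat L n.+1 chi := sector_sub Hs' (proj_sector HPn1 Hs').
  have chi1 : complex.Re (inner R stat L n.+1 chi chi) <= 1.
    have [_ Hc] := proj_contr HPn1 Hs'; apply: le_trans Hc _.
    by rewrite -(vnorm_sq _ stat _ n.+1 psi') Hn' expr1n.
  set Y := fun c => \sum_(j < L) cre R stat L j (Pn (ann R stat L j chi)) c.
  have HY : sector R stat L n.+1 Y.
    apply: sector_sum => j; apply: cre_sector; apply: (proj_sector HPn).
    exact: ann_sector.
  have -> : X psi' = (fun c => Y c - Pn1 Y c) by [].
  apply: le_trans (proj2 (proj_contr HPn1 HY)) _.
  apply: le_trans (sum_bound _ _ _ _ _) _.
  apply: ler_wpM2l; first by rewrite ler0n.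
  apply: (@le_trans _ _ (\sum_(j < L) (n.+1)%:R *
     complex.Re (inner R stat L n (ann R stat L j chi) (ann R stat L j chi)))).
    apply: ler_sum => j _; apply: le_trans (cre_bound _ _ _ _ _ _) _.
    apply: ler_wpM2l; first by rewrite ler0n.
    exact: (proj1 (proj_contr HPn (ann_sector Hchi))).
  rewrite -mulr_sumr -Re_sum number_sum natC ReZ.
  have a0 : 0 <= (n.+1)%:R :> R by rewrite ler0n.
  by rewrite mulrA -expr2; apply: ler_piMr => //; rewrite exprn_ge0.
apply: le_ereal_inf_tmp => _ [psi [Hpsi [Horth Hnorm]] <-].
have psi1 : complex.Re (inner R stat L n.+1 psi psi) = 1.
  by rewrite -(vnorm_sq _ stat _ n.+1 psi) Hnorm expr1n.
have HP1 : forall c, Pn1 psi c = 0.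
  have [[HsP HkP] Ho] := HPn1 _ Hpsi.
  have o1 : inner R stat L n.+1 (Pn1 psi) psi = 0 by apply: Horth.
  have o2 := Ho _ (conj HsP HkP).
  rewrite innerBr o1 sub0r in o2.
  have o3 : inner R stat L n.+1 (Pn1 psi) (Pn1 psi) = 0.
    by apply/eqP; rewrite -oppr_eq0 o2.
  move=> c; case: (boolP (Defs.in_sector stat L n.+1 c)) => Hc.
    exact: (inner_eq0 _ _ _ _ _ o3 c Hc).
  exact: HsP.
have EPpsi : (fun c => psi c - Pn1 psi c) = psi.
  by apply: funext => c; rewrite HP1 subr0.
set phi := fun j => ann R stat L j psi.
have Hphi : forall j, sector R stat L n (phi j) by move=> j; exact: ann_sector.
set Y := fun c => \sum_(j < L) cre R stat L j (Pn (phi j)) c.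
have HY : sector R stat L n.+1 Y.
  apply: sector_sum => j; apply: cre_sector; exact: (proj_sector HPn).
have EX : X psi = (fun c => Y c - Pn1 Y c) by rewrite /X /= EPpsi.
have RX : complex.Re (inner R stat L n.+1 psi (X psi)) =
    \sum_(j < L) complex.Re (inner R stat L n (Pn (phi j)) (Pn (phi j))).
  rewrite EX innerBr.
  have [[HsY HkY] _] := HPn1 _ HY.
  rewrite (inner_conj _ _ _ _ (Pn1 Y) psi) Horth ?conjC0 ?subr0; last by split.
  rewrite /Y inner_sumr Re_sum; apply: eq_bigr => j _.
  by rewrite adjoint (proj_inner HPn (Hphi j)).
have kX : complex.Re (inner R stat L n.+1 psi (X psi)) <= opnorm R stat L n.+1 X.
  apply: le_trans (cs_unit _ _ _ _ _ _ psi1) _.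
  have HS : S (vnorm R stat L n.+1 (X psi)) by exists psi.
  exact: (sup_upper_bound (conj (ex_intro _ _ HS) Hub)).
set t := fun j => complex.Re (inner R stat L n (fun c => phi j c - Pn (phi j) c)
                                              (fun c => phi j c - Pn (phi j) c)).
set p := fun j => complex.Re (inner R stat L n (Pn (phi j)) (Pn (phi j))).
set h := fun j => complex.Re (inner R stat L n (phi j) (H (phi j))).
have Hsum : \sum_(j < L) (p j + t j) = (n.+1)%:R.
  have := congr1 (@complex.Re R) (number_sum R stat L n psi).
  rewrite natC ReZ psi1 mulr1 Re_sum => <-.
  by apply: eq_bigr => j _; rewrite (proj_pyth HPn (Hphi j)) ReD.
rewrite big_split /= in Hsum.
have Ht : (n.+1)%:R - opnorm R stat L n.+1 X <= \sum_(j < L) t j.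
  rewrite -/p in RX; lra.
have hpos : forall j, 0 <= h j.
  by move=> j; have := Hpos _ (Hphi j); rewrite lecE => /andP[_].
have tpos : forall j, 0 <= t j by move=> j; apply: inner_Re_ge0.
have Hgl : forall j, ((t j)%:E * gap R stat L H n <= (h j)%:E)%E.
  move=> j; exact: (gap_lower _ _ _ _ _ _ _ _ Hsa HPn _ (Hphi j)).
set A := (n.+1 - m0)%:R : R.
have A0 : 0 < A by rewrite /A ltr0n; lia.
have Hpsi_ge : A^-1 * \sum_(j < L) h j <= complex.Re (inner R stat L n.+1 psi (H psi)).
  have := Hineq psi Hpsi; rewrite lecE => /andP[_].
  rewrite natC -fmorphV ReZ Re_sum.
  by under eq_bigr => j _ do rewrite adjoint.
have hsum0 : 0 <= A^-1 * \sum_(j < L) h j.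
  by apply: mulr_ge0; [rewrite invr_ge0 ltW | apply: sumr_ge0 => j _].
move: g0 Hgl; case: (gap R stat L H n) => [r| |] // g0 Hgl.
  rewrite lee_fin in g0; rewrite -EFinM lee_fin.
  have Hj : forall j, t j * r <= h j by move=> j; have := Hgl j; rewrite -EFinM lee_fin.
  apply: le_trans Hpsi_ge.
  have H1 : ((n.+1)%:R - opnorm R stat L n.+1 X) * r <= \sum_(j < L) h j.
    apply: le_trans (ler_wpM2r g0 Ht) _.
    by rewrite mulr_suml; apply: ler_sum => j _.
  rewrite mulrAC mulrC; apply: ler_wpM2l => //.
  by rewrite invr_ge0 ltW.
have t0 : forall j, t j = 0.
  move=> j; have := tpos j; rewrite le_eqVlt => /predU1P[<-//|tp].
  by have := Hgl j; rewrite mulry gtr0_sg // mul1e leye_eq.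
have Hc : ((n.+1)%:R - opnorm R stat L n.+1 X) / A <= 0.
  apply: mulr_le0_ge0; last by rewrite invr_ge0 ltW.
  by move: Ht; rewrite big1 // => j _; rewrite t0.
apply: le_trans (mule_le0_ge0 _ _) _; first by rewrite lee_fin.
  by [].
by rewrite lee_fin (le_trans hsum0 Hpsi_ge).
Qed.
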